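(* Let $\mathbf S,\mathbf M\in\mathbb R^{d\times d}$ be symmetric positive definite, $\mathbf T$ symmetric positive semi-definite, $\sigma>0$, $n\ge1$, and $\mathbf S'=\mathbf M^{-1/2}\mathbf S\mathbf M^{-1/2}$, $\mathbf T'=\mathbf M^{-1/2}\mathbf T\mathbf M^{-1/2}$. Then $$\sup_{\substack{\mathbf F\succ\mathbf 0\\ \operatorname{tr}\mathbf F\le 1/\pi^2}}\Big\langle\mathbf T',\Big(\mathbf F^{-1}+\frac{n\mathbf S'}{\sigma^2}\Big)^{-1}\Big\rangle=\inf_{\mathbf A\in\mathbb R^{d\times d}}\ \frac1{\pi^2}\big\|(\mathbf I-\mathbf A)^\top\mathbf T'(\mathbf I-\mathbf A)\big\|+\frac{\sigma^2}{n}\big\langle\mathbf T',\mathbf A(\mathbf S')^{-1}\mathbf A^\top\big\rangle .$$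
   Context: $\|\cdot\|$ denotes the spectral norm, $\langle\mathbf A,\mathbf B\rangle=\operatorname{tr}(\mathbf A^\top\mathbf B)$, and the supremum ranges over symmetric positive definite matrices $\mathbf F$ with trace (equivalently nuclear norm) at most $1/\pi^2$. *)

(* Defs.v *)
From HB Require Import structures.
From mathcomp Require Import all_boot all_order all_algebra.
From mathcomp Require Import all_classical all_reals all_analysis.
Set Implicit Arguments. Unset Strict Implicit. Unset Printing Implicit Defensive.
Import Order.TTheory GRing.Theory Num.Theory.
Local Open Scope classical_set_scope.
Local Open Scope ring_scope.

Section Defs.
Context {R : realType} {d : nat}.

Definition symmx (A : 'M[R]_d) : Prop := A^T = A.

Definition qform (A : 'M[R]_d) (v : 'cV[R]_d) : R := (v^T *m A *m v) ord0 ord0.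

Definition posdefmx (A : 'M[R]_d) : Prop :=
  symmx A /\ forall v : 'cV[R]_d, v != 0 -> 0 < qform A v.
Definition psdmx (A : 'M[R]_d) : Prop :=
  symmx A /\ forall v : 'cV[R]_d, 0 <= qform A v.

Definition frob (A B : 'M[R]_d) : R := \tr (A^T *m B).

Definition vnorm (v : 'cV[R]_d) : R := Num.sqrt ((v^T *m v) ord0 ord0).

Definition spec_norm (B : 'M[R]_d) : R :=
  sup [set vnorm (B *m v) | v in [set v : 'cV[R]_d | vnorm v = 1]].

End Defs.

(* Main.v *)
Require Import Defs.
From HB Require Import structures.
From mathcomp Require Import all_boot all_order all_algebra.
From mathcomp Require Import all_classical all_reals all_analysis.
From mathcomp Require Import ring lra.
Import Order.TTheory GRing.Theory Num.Theory.
Local Open Scope classical_set_scope.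
Local Open Scope ring_scope.

Section LA.
Context {R : realType} {d : nat}.
Implicit Types (A B X Y : 'M[R]_d) (u v w : 'cV[R]_d).

Definition bil A u v : R := (u^T *m A *m v) 0 0.

Lemma qformE A v : qform A v = bil A v v. Proof. by []. Qed.

Lemma bilDl A u1 u2 v : bil A (u1 + u2) v = bil A u1 v + bil A u2 v.
Proof. by rewrite /bil linearD /= !mulmxDl mxE. Qed.
Lemma bilDr A u v1 v2 : bil A u (v1 + v2) = bil A u v1 + bil A u v2.
Proof. by rewrite /bil !mulmxDr mxE. Qed.
Lemma bilZl A a u v : bil A (a *: u) v = a * bil A u v.
Proof. by rewrite /bil linearZ /= -!scalemxAl mxE. Qed.
Lemma bilZr A a u v : bil A u (a *: v) = a * bil A u v.
Proof. by rewrite /bil -!scalemxAr mxE. Qed.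
Lemma bilNl A u v : bil A (- u) v = - bil A u v.
Proof. by rewrite -scaleN1r bilZl mulN1r. Qed.
Lemma bilNr A u v : bil A u (- v) = - bil A u v.
Proof. by rewrite -scaleN1r bilZr mulN1r. Qed.
Lemma bilBl A u1 u2 v : bil A (u1 - u2) v = bil A u1 v - bil A u2 v.
Proof. by rewrite bilDl bilNl. Qed.
Lemma bilBr A u v1 v2 : bil A u (v1 - v2) = bil A u v1 - bil A u v2.
Proof. by rewrite bilDr bilNr. Qed.
Lemma bil_addA A1 A2 u v : bil (A1 + A2) u v = bil A1 u v + bil A2 u v.
Proof. by rewrite /bil mulmxDr mulmxDl mxE. Qed.
Lemma bil_scaleA a A u v : bil (a *: A) u v = a * bil A u v.
Proof. by rewrite /bil -scalemxAr -scalemxAl mxE. Qed.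
Lemma bil_subA A1 A2 u v : bil (A1 - A2) u v = bil A1 u v - bil A2 u v.
Proof. by rewrite -scaleN1r bil_addA bil_scaleA mulN1r. Qed.

Lemma bil_tr A u v : bil A u v = bil A^T v u.
Proof.
rewrite /bil; transitivity (((u^T *m A *m v)^T) 0 0); first by rewrite [in RHS]mxE.
by rewrite !trmx_mul trmxK mulmxA.
Qed.

Lemma bil_sym A u v : symmx A -> bil A u v = bil A v u.
Proof. by move=> hA; rewrite bil_tr hA. Qed.

Lemma bil_mull A B u v : bil (A *m B) u v = bil B (A^T *m u) v.
Proof. by rewrite /bil trmx_mul trmxK !mulmxA. Qed.
Lemma bil_mulr A B u v : bil (A *m B) u v = bil A u (B *m v).
Proof. by rewrite /bil !mulmxA. Qed.
Lemma bil1 u v : bil 1%:M u v = bil 1%:M v u.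
Proof. by rewrite bil_sym // /symmx trmx1. Qed.


Definition ev (i : 'I_d) : 'cV[R]_d := delta_mx i 0.

Lemma bil_e A i j : bil A (ev i) (ev j) = A i j.
Proof. by rewrite /bil /ev trmx_delta -rowE -colE !mxE. Qed.

Lemma bil_expand A u v s : symmx A ->
  bil A (u + s *: v) (u + s *: v) = bil A u u + 2 * s * bil A u v + s ^+ 2 * bil A v v.
Proof.
move=> hA; rewrite !bilDl !bilDr !bilZl !bilZr (bil_sym _ v u hA); ring.
Qed.

Lemma cs A u v : symmx A -> (forall w, 0 <= bil A w w) ->
  bil A u v ^+ 2 <= bil A u u * bil A v v.
Proof.
move=> hA hp; set a := bil A u u; set b := bil A u v; set c := bil A v v.
have ha : 0 <= a := hp u. have hc : 0 <= c := hp v.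
have key s : 0 <= a + 2 * s * b + s ^+ 2 * c by rewrite -bil_expand.
have [c0|cpos] := eqVneq c 0.
  have [b0|bn0] := eqVneq b 0; first by rewrite b0 c0 expr0n /= mulr0.
  have := key (- (a + 1) / (2 * b)); rewrite c0 mulr0 addr0.
  have -> : 2 * (- (a + 1) / (2 * b)) * b = - (a + 1) by field.
  lra.
have cp : 0 < c by rewrite lt_neqAle eq_sym cpos hc.
have := key (- b / c).
have -> : a + 2 * (- b / c) * b + (- b / c) ^+ 2 * c = a - b ^+ 2 / c.
  by field; rewrite gt_eqF.
rewrite subr_ge0 ler_pdivrMr //; lra.
Qed.

Lemma psd_nonneg X v : psdmx X -> 0 <= bil X v v.
Proof. by case=> _ h; exact: h. Qed.

Lemma psd_diag0 X i j : psdmx X -> X i i = 0 -> X i j = 0.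
Proof.
move=> hX h0; have := cs X (ev i) (ev j) hX.1 (fun w => psd_nonneg X w hX).
rewrite !bil_e h0 mul0r => h; apply/eqP; rewrite -sqrf_eq0 eq_le h sqr_ge0 //.
Qed.

Lemma bil_outer x y u v : bil (x *m y^T) u v = bil 1%:M u x * bil 1%:M y v.
Proof.
rewrite /bil !mulmx1 !mulmxA; rewrite -(mulmxA (u^T *m x)) mxE big_ord1 //.
Qed.


Lemma psd_step X i : psdmx X -> 0 < X i i ->
  let x := Num.sqrt ((X i i)^-1) *: (X *m ev i) in
  psdmx (X - x *m x^T) /\ (forall j, x j 0 = Num.sqrt ((X i i)^-1) * X j i).
Proof.
move=> hX hi x; split; last first.
  by move=> j; rewrite /x /ev -colE !mxE.
split.
  by rewrite /symmx linearB /= trmx_mul trmxK hX.1.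
move=> v; rewrite qformE bil_subA bil_outer (bil1 x v).
have -> : bil 1%:M v x = Num.sqrt ((X i i)^-1) * bil X v (ev i).
  by rewrite /x bilZr -bil_mulr mul1mx.
set b := bil X v (ev i); set s := Num.sqrt _.
have hs : s ^+ 2 = (X i i)^-1 by rewrite sqr_sqrtr // invr_ge0 ltW.
have hcs := cs X v (ev i) hX.1 (fun w => psd_nonneg X w hX).
rewrite bil_e -/b in hcs.
have -> : s * b * (s * b) = b ^+ 2 * s ^+ 2 by ring.
rewrite hs subr_ge0 -ler_pdivlMr ?invr_gt0 // invrK.
by rewrite -ler_pdivrMr // in hcs *; rewrite mulrC ler_pdivrMr // -ler_pdivrMr // mulrC.
Qed.


Lemma outer_diag (x : 'cV[R]_d) j : (x *m x^T) j j = x j 0 ^+ 2.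
Proof. by rewrite mxE big_ord1 mxE expr2. Qed.

Lemma gram_aux X k : psdmx X -> (k <= d)%N ->
  exists s : seq 'cV[R]_d, psdmx (X - \sum_(x <- s) x *m x^T) /\
    forall i : 'I_d, (i < k)%N -> (X - \sum_(x <- s) x *m x^T) i i = 0.
Proof.
move=> hX; elim: k => [|k IH] hk.
  by exists [::]; rewrite big_nil subr0; split.
have [s [hY hz]] := IH (ltnW hk).
set Y := X - _ in hY hz.
pose i0 : 'I_d := Ordinal hk.
have [h0|hn0] := eqVneq (Y i0 i0) 0.
  exists s; split => // i; rewrite ltnS leq_eqVlt => /orP [/eqP hi|]; last exact: hz.
  by have -> : i = i0 by apply: val_inj.
have hpos : 0 < Y i0 i0.
  by rewrite lt_neqAle eq_sym hn0 -bil_e; exact: psd_nonneg.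
have [hps hx] := psd_step Y i0 hY hpos.
set x := _ *: _ in hps hx.
exists (x :: s); rewrite big_cons.
have -> : X - (x *m x^T + \sum_(j <- s) j *m j^T) = Y - x *m x^T.
  by rewrite /Y opprD addrA addrAC.
have esub (M N : 'M[R]_d) j : (M - N) j j = M j j - N j j by rewrite !mxE.
split => // i; rewrite esub outer_diag hx.
rewrite ltnS leq_eqVlt => /orP [/eqP hi|hi].
  have -> : i = i0 by apply: val_inj.
  rewrite exprMn sqr_sqrtr ?invr_ge0 ?ltW // expr2 mulrA mulVf // mul1r subrr //.
by rewrite (psd_diag0 _ _ i0 hY (hz i hi)) (hz i hi) mulr0 expr0n subr0.
Qed.

Lemma psd_zero_diag Y : psdmx Y -> (forall i, Y i i = 0) -> Y = 0.
Proof.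
by move=> hY h; apply/matrixP => i j; rewrite mxE (psd_diag0 _ _ j hY (h i)).
Qed.

Lemma psd_gram X : psdmx X -> exists s : seq 'cV[R]_d, X = \sum_(x <- s) x *m x^T.
Proof.
move=> hX; have [s [hY hz]] := gram_aux X d hX (leqnn d).
exists s; apply/eqP; rewrite -subr_eq0; apply/eqP; apply: psd_zero_diag hY _.
by move=> i; apply: hz.
Qed.


Definition nsq v : R := (v^T *m v) 0 0.

Lemma bil1E u v : bil 1%:M u v = (u^T *m v) 0 0.
Proof. by rewrite /bil mulmx1. Qed.

Lemma nsqE v : nsq v = bil 1%:M v v.
Proof. by rewrite bil1E. Qed.

Lemma sym1 : symmx (1%:M : 'M[R]_d).
Proof. by rewrite /symmx trmx1. Qed.

Lemma nsq_ge0 v : 0 <= nsq v.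
Proof.
rewrite /nsq mxE; apply: sumr_ge0 => i _; rewrite mxE -expr2; exact: sqr_ge0.
Qed.

Lemma nsq_gt0 v : v != 0 -> 0 < nsq v.
Proof.
move=> hv; rewrite lt_neqAle nsq_ge0 andbT eq_sym; apply: contra hv => h.
rewrite /nsq mxE in h.
have hf (i : 'I_d) : 0 <= (v^T) 0 i * v i 0 by rewrite mxE -expr2 sqr_ge0.
move/eqP: h => /(psumr_eq0P (fun i _ => hf i)) h.
apply/eqP/matrixP => i j; rewrite (ord1 j) mxE; have := h i isT.
by rewrite mxE -expr2 => /eqP; rewrite sqrf_eq0 => /eqP.
Qed.

Lemma csv u v : bil 1%:M u v ^+ 2 <= nsq u * nsq v.
Proof. by rewrite !nsqE; apply: cs sym1 _ => w; rewrite -nsqE nsq_ge0. Qed.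

Lemma bil_sum (s : seq 'cV[R]_d) (f : 'cV[R]_d -> 'M[R]_d) u v :
  bil (\sum_(x <- s) f x) u v = \sum_(x <- s) bil (f x) u v.
Proof.
elim: s => [|a s IH]; first by rewrite !big_nil /bil mulmx0 mul0mx mxE.
by rewrite !big_cons bil_addA IH.
Qed.

Lemma tr_sum (s : seq 'cV[R]_d) (f : 'cV[R]_d -> 'M[R]_d) :
  \tr (\sum_(x <- s) f x) = \sum_(x <- s) \tr (f x).
Proof.
elim: s => [|a s IH]; first by rewrite !big_nil mxtrace0.
by rewrite !big_cons mxtraceD IH.
Qed.

Lemma tr11 (M : 'M[R]_1) : \tr M = M 0 0.
Proof. by rewrite /mxtrace big_ord1. Qed.

Lemma tr_outer x Y : \tr (x *m x^T *m Y) = bil Y x x.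
Proof. by rewrite -mulmxA mxtrace_mulC tr11 /bil. Qed.

Lemma trace_psd X Y : psdmx X -> (forall v, 0 <= bil Y v v) -> 0 <= \tr (X *m Y).
Proof.
move=> hX hY; have [s ->] := psd_gram _ hX.
rewrite mulmx_suml tr_sum; apply: sumr_ge0 => x _; rewrite tr_outer; exact: hY.
Qed.

Lemma trace_psdC X Y : psdmx X -> (forall v, 0 <= bil Y v v) -> 0 <= \tr (Y *m X).
Proof. by move=> hX hY; rewrite mxtrace_mulC; exact: trace_psd. Qed.

Lemma trE X : \tr X = \sum_i bil X (ev i) (ev i).
Proof. by apply: eq_bigr => i _; rewrite bil_e. Qed.

Lemma tr_le X Y : (forall v, bil X v v <= bil Y v v) -> \tr X <= \tr Y.
Proof. by move=> h; rewrite !trE; apply: ler_sum => i _; exact: h. Qed.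

Lemma qform_le_tr X v : psdmx X -> bil X v v <= \tr X * nsq v.
Proof.
move=> hX; have [s ->] := psd_gram _ hX.
rewrite bil_sum tr_sum mulr_suml; apply: ler_sum => x _.
rewrite bil_outer (bil1 x v) -expr2 -(mulmx1 (x *m x^T)) tr_outer mulrC -nsqE.
exact: csv.
Qed.


Lemma sq_le (x y : R) : 0 <= y -> x ^+ 2 <= y ^+ 2 -> x <= y.
Proof. move=> hy h; nra. Qed.

Lemma op_bound B lam v : psdmx B -> 0 <= lam ->
  (forall w, bil B w w <= lam * nsq w) -> nsq (B *m v) <= lam ^+ 2 * nsq v.
Proof.
move=> hB hl hw; set y := B *m v.
have e1 : bil B v y = nsq y by rewrite /nsq /y trmx_mul hB.1 /bil mulmxA.
have hcs := cs B v y hB.1 (fun w => psd_nonneg B w hB).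
rewrite e1 in hcs.
have hb := hw v; have hc := hw y.
have h0v := psd_nonneg B v hB; have h0y := psd_nonneg B y hB.
have hny := nsq_ge0 y; have hnv := nsq_ge0 v.
have h2 : nsq y ^+ 2 <= (lam * nsq v) * (lam * nsq y).
  exact: (le_trans hcs (ler_pM h0v h0y hb hc)).
have [->|hy0] := eqVneq (nsq y) 0; first by rewrite mulr_ge0 ?sqr_ge0.
have hyp : 0 < nsq y by rewrite lt_neqAle eq_sym hy0 hny.
rewrite -(ler_pM2r hyp) -expr2; apply: (le_trans h2).
by rewrite le_eqVlt; apply/orP; left; apply/eqP; ring.
Qed.

Definition vset B := [set vnorm (B *m v) | v in [set v : 'cV[R]_d | vnorm v = 1]].

Lemma vnormE v : vnorm v = Num.sqrt (nsq v). Proof. by []. Qed.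

Lemma nsq_BtB B v : nsq (B *m v) = bil (B^T *m B) v v.
Proof. by rewrite /nsq trmx_mul /bil !mulmxA. Qed.

Lemma psd_BtB B : psdmx (B^T *m B).
Proof.
split; first by rewrite /symmx trmx_mul trmxK.
by move=> v; rewrite qformE -nsq_BtB nsq_ge0.
Qed.

Lemma nsq_le_tr B v : nsq (B *m v) <= \tr (B^T *m B) * nsq v.
Proof. by rewrite nsq_BtB; apply: qform_le_tr; exact: psd_BtB. Qed.

Lemma vset_ub B : has_ubound (vset B).
Proof.
exists (Num.sqrt (\tr (B^T *m B))) => x [v /= hv <-].
rewrite vnormE; apply: ler_wsqrtr; have := nsq_le_tr B v.
have -> : nsq v = 1 by rewrite vnormE in hv; rewrite -(sqr_sqrtr (nsq_ge0 v)) hv expr1n.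
by rewrite mulr1.
Qed.

Lemma spec_ge0 B : 0 <= spec_norm B.
Proof.
rewrite /spec_norm -/(vset B).
case: (pselect (vset B !=set0)) => [[x hx]|/nonemptyPn ->]; last by rewrite sup0.
apply: le_trans (ub_le_sup (vset_ub B) hx).
by case: hx => v _ <-; exact: sqrtr_ge0.
Qed.

Lemma spec_le B lam : 0 <= lam -> (forall v, nsq (B *m v) <= lam ^+ 2 * nsq v) ->
  spec_norm B <= lam.
Proof.
move=> hl h; rewrite /spec_norm -/(vset B).
case: (pselect (vset B !=set0)) => [ne|/nonemptyPn ->]; last by rewrite sup0.
apply: ge_sup ne _ => x [v /= hv <-].
have hv1 : nsq v = 1 by rewrite vnormE in hv; rewrite -(sqr_sqrtr (nsq_ge0 v)) hv expr1n.
rewrite vnormE -(ger0_norm hl) -sqrtr_sqr; apply: ler_wsqrtr.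
by have := h v; rewrite hv1 mulr1.
Qed.

Lemma nsqZ a v : nsq (a *: v) = a ^+ 2 * nsq v.
Proof. by rewrite !nsqE bilZl bilZr mulrA expr2. Qed.

Lemma nsq_spec B u : nsq (B *m u) <= spec_norm B ^+ 2 * nsq u.
Proof.
have [h0|hn] := eqVneq (nsq u) 0.
  by rewrite h0 mulr0; have := nsq_le_tr B u; rewrite h0 mulr0.
have hp : 0 < nsq u by rewrite lt_neqAle eq_sym hn nsq_ge0.
set r := Num.sqrt (nsq u).
have hr : 0 < r by rewrite sqrtr_gt0.
have hr2 : r ^+ 2 = nsq u by rewrite sqr_sqrtr // ltW.
set w := r^-1 *: u.
have hw : nsq w = 1 by rewrite nsqZ -hr2 exprVn mulVf // expf_neq0 // gt_eqF.
have hvw : vset B (vnorm (B *m w)).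
  by exists w => //=; rewrite vnormE hw sqrtr1.
have hle := ub_le_sup (vset_ub B) hvw.
rewrite -/(vset B) in hle *.
have : nsq (B *m w) <= spec_norm B ^+ 2.
  rewrite -(sqr_sqrtr (nsq_ge0 (B *m w))) -vnormE.
  by apply: lerXn2r => //; rewrite ?nnegrE ?sqrtr_ge0 // spec_ge0.
rewrite /w -scalemxAr nsqZ exprVn -hr2 => h.
by rewrite -ler_pdivrMr ?exprn_gt0 // mulrC.
Qed.

Lemma quad_le_spec B u : bil B u u <= spec_norm B * nsq u.
Proof.
apply: sq_le; first by rewrite mulr_ge0 ?spec_ge0 ?nsq_ge0.
have -> : bil B u u = bil 1%:M u (B *m u) by rewrite -bil_mulr mul1mx.
apply: (le_trans (csv _ _)).
have := nsq_spec B u => h.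
have hn := nsq_ge0 u.
apply: (le_trans (ler_wpM2l hn h)).
by rewrite le_eqVlt; apply/orP; left; apply/eqP; ring.
Qed.


Lemma bil0v A v : bil A 0 v = 0.
Proof. by rewrite /bil trmx0 !mul0mx mxE. Qed.

Lemma posdef_psd {X : 'M[R]_d} : posdefmx X -> psdmx X.
Proof.
case=> hs hp; split => // v; have [->|hv] := eqVneq v 0.
  by rewrite qformE bil0v.
exact: ltW (hp v hv).
Qed.

Lemma bil_congr M X u v : bil X (M *m u) (M *m v) = bil (M^T *m X *m M) u v.
Proof. by rewrite /bil trmx_mul !mulmxA. Qed.

Lemma posdef_unit {X : 'M[R]_d} : posdefmx X -> X \in unitmx.
Proof.
move=> [hs hp]; rewrite unitmxE unitfE; apply/negP => /det0P [v hv0 hv].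
have hw : v^T != 0 by apply: contra hv0 => /eqP h; rewrite -[v]trmxK h trmx0.
have := hp _ hw; rewrite /qform trmxK hv mul0mx mxE ltxx //.
Qed.

Lemma sym_inv {X : 'M[R]_d} : symmx X -> symmx (invmx X).
Proof. by move=> h; rewrite /symmx trmx_inv h. Qed.

Lemma posdef_inv {X : 'M[R]_d} : posdefmx X -> posdefmx (invmx X).
Proof.
move=> hX; have hu := posdef_unit hX; split; first exact: sym_inv hX.1.
move=> v hv; rewrite qformE.
have -> : bil (invmx X) v v = bil X (invmx X *m v) (invmx X *m v).
  rewrite bil_congr (sym_inv hX.1) -mulmxA mulmxV // mulmx1 //.
apply: hX.2; apply: contra hv => /eqP h.
by rewrite -[v]mul1mx -(mulmxV hu) -mulmxA h mulmx0.
Qed.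

Lemma posdef_add {X Y : 'M[R]_d} : posdefmx X -> psdmx Y -> posdefmx (X + Y).
Proof.
move=> hX hY; split; first by rewrite /symmx linearD /= hX.1 hY.1.
move=> v hv; rewrite qformE bil_addA; apply: ltr_wpDr; first exact: psd_nonneg.
exact: hX.2.
Qed.

Lemma psd_add {X Y : 'M[R]_d} : psdmx X -> psdmx Y -> psdmx (X + Y).
Proof.
move=> hX hY; split; first by rewrite /symmx linearD /= hX.1 hY.1.
by move=> v; rewrite qformE bil_addA addr_ge0 //; exact: psd_nonneg.
Qed.

Lemma posdef_scale {a : R} {X : 'M[R]_d} : 0 < a -> posdefmx X -> posdefmx (a *: X).
Proof.
move=> ha hX; split; first by rewrite /symmx linearZ /= hX.1.
by move=> v hv; rewrite qformE bil_scaleA mulr_gt0 //; exact: hX.2.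
Qed.

Lemma psd_scale {a : R} {X : 'M[R]_d} : 0 <= a -> psdmx X -> psdmx (a *: X).
Proof.
move=> ha hX; split; first by rewrite /symmx linearZ /= hX.1.
by move=> v; rewrite qformE bil_scaleA mulr_ge0 //; exact: psd_nonneg.
Qed.

Lemma psd_congr (M : 'M[R]_d) {X : 'M[R]_d} : psdmx X -> psdmx (M^T *m X *m M).
Proof.
move=> hX; split; first by rewrite /symmx !trmx_mul trmxK hX.1 mulmxA.
by move=> v; rewrite qformE -bil_congr; exact: psd_nonneg.
Qed.

Lemma posdef_congr {M X : 'M[R]_d} : posdefmx X -> posdefmx M -> posdefmx (M^T *m X *m M).
Proof.
move=> hX hM; split; first exact: (psd_congr M (posdef_psd hX)).1.
move=> v hv; rewrite qformE -bil_congr; apply: hX.2.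
apply/negP => /eqP h; have := hM.2 v hv; rewrite qformE /bil -mulmxA h mulmx0 mxE ltxx //.
Qed.

Lemma inv_order {X Y : 'M[R]_d} : posdefmx X -> posdefmx Y ->
  (forall v, bil Y v v <= bil X v v) -> forall v, bil (invmx X) v v <= bil (invmx Y) v v.
Proof.
move=> hX hY h v.
have huX := posdef_unit hX; have huY := posdef_unit hY.
set w := invmx X *m v; set z := invmx Y *m v.
have e1 : bil X w w = bil (invmx X) v v.
  by rewrite /w bil_congr (sym_inv hX.1) -mulmxA mulmxV // mulmx1.
have e2 : bil Y z z = bil (invmx Y) v v.
  by rewrite /z bil_congr (sym_inv hY.1) -mulmxA mulmxV // mulmx1.
have e3 : bil Y w z = bil (invmx X) v v.
  rewrite /w /z /bil -mulmxA (mulmxA Y) mulmxV // mul1mx trmx_mul.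
  by rewrite (sym_inv hX.1).
have := psd_nonneg Y (w + (-1) *: z) (posdef_psd hY).
rewrite bil_expand; last exact: hY.1.
rewrite e2 e3 => h1.
have := h w; rewrite e1 => h2.
rewrite sqrrN expr1n in h1.
lra.
Qed.


Lemma tr_psd_ge0 X : psdmx X -> 0 <= \tr X.
Proof. by move=> hX; rewrite trE; apply: sumr_ge0 => i _; exact: psd_nonneg. Qed.

Lemma nsq_sub a b : nsq (a - b) <= 2 * nsq a + 2 * nsq b.
Proof.
have h1 := bil_expand 1%:M a b (-1) sym1.
have h2 := bil_expand 1%:M a b 1 sym1.
have h0 := nsq_ge0 (a + 1 *: b).
rewrite !nsqE -scaleN1r h1; rewrite nsqE h2 in h0.
rewrite sqrrN expr1n; rewrite expr1n in h0; lra.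
Qed.

Lemma nsq_psd_bound X tau x : psdmx X -> \tr X <= tau -> nsq (X *m x) <= tau ^+ 2 * nsq x.
Proof.
move=> hX ht; have h0 := tr_psd_ge0 X hX.
apply: (le_trans (op_bound X (\tr X) x hX h0 (fun w => qform_le_tr X w hX))).
apply: ler_wpM2r; first exact: nsq_ge0.
by apply: lerXn2r; rewrite ?nnegrE // (le_trans h0 ht).
Qed.

Lemma trB (X Y : 'M[R]_d) : \tr (X - Y) = \tr X - \tr Y.
Proof. by rewrite /mxtrace -sumrB; apply: eq_bigr => i _; rewrite !mxE. Qed.

Lemma tr_le_lam U Z lam : psdmx U -> (forall v, bil Z v v <= lam * nsq v) ->
  \tr (U *m Z) <= lam * \tr U.
Proof.
move=> hU h.
have := trace_psd U (lam *: 1%:M - Z) hU.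
rewrite mulmxBr trB -scalemxAr mulmx1 mxtraceZ subr_ge0; apply => v.
by rewrite bil_subA bil_scaleA -nsqE subr_ge0.
Qed.

Lemma resolvent (M0 Mt D : 'M[R]_d) (t : R) : M0 \in unitmx -> Mt \in unitmx ->
  Mt = M0 + t *: D ->
  invmx M0 - invmx Mt = t *: (invmx M0 *m D *m invmx M0)
                        - t ^+ 2 *: (invmx M0 *m D *m invmx Mt *m D *m invmx M0).
Proof.
move=> h0 ht e.
have eD : Mt - M0 = t *: D by rewrite e addrAC subrr add0r.
have e1 : invmx M0 - invmx Mt = t *: (invmx Mt *m D *m invmx M0).
  have : invmx Mt *m (Mt - M0) *m invmx M0 = invmx M0 - invmx Mt.
    by rewrite mulmxBr mulmxBl mulVmx // mul1mx -mulmxA mulmxV // mulmx1.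
  by rewrite eD -scalemxAr -scalemxAl => <-.
have e2 : invmx M0 *m D *m invmx Mt = invmx M0 *m D *m invmx M0
            - t *: (invmx M0 *m D *m invmx Mt *m D *m invmx M0).
  apply/eqP; rewrite eq_sym subr_eq.
  have -> : t *: (invmx M0 *m D *m invmx Mt *m D *m invmx M0)
      = invmx M0 *m D *m (t *: (invmx Mt *m D *m invmx M0)) by rewrite -scalemxAr !mulmxA.
  by rewrite -e1 -mulmxDr addrC subrK.
have e3 : invmx M0 - invmx Mt = t *: (invmx M0 *m D *m invmx Mt).
  have : invmx M0 *m (Mt - M0) *m invmx Mt = invmx M0 - invmx Mt.
    by rewrite mulmxBr mulmxBl mulVmx // mul1mx -mulmxA mulmxV // mulmx1 ?subrr.
  by rewrite eD -scalemxAr -scalemxAl => <-.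
by rewrite e3 {1}e2 scalerBr scalerA -expr2.
Qed.

End LA.

Section Core.
Context {R : realType} {d : nat}.
Variables (T P : 'M[R]_d).
Hypotheses (hT : psdmx T) (hP : posdefmx P).

Let N := invmx P.
Let W (F : 'M[R]_d) := invmx (F + N).

Lemma hN : posdefmx N. Proof. exact: posdef_inv. Qed.
Lemma hPu : P \in unitmx. Proof. exact: posdef_unit. Qed.
Lemma hPN : P *m N = 1%:M. Proof. exact: mulmxV hPu. Qed.
Lemma hNsym : N^T = N. Proof. exact: hN.1. Qed.

Lemma hM {F : 'M[R]_d} : posdefmx F -> posdefmx (F + N).
Proof. by move=> hF; apply: posdef_add hF (posdef_psd hN). Qed.

Lemma hMW {F : 'M[R]_d} : posdefmx F -> (F + N) *m W F = 1%:M.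
Proof. by move=> hF; apply: mulmxV; apply: posdef_unit; exact: hM. Qed.
Lemma hWM {F : 'M[R]_d} : posdefmx F -> W F *m (F + N) = 1%:M.
Proof. by move=> hF; apply: mulVmx; apply: posdef_unit; exact: hM. Qed.
Lemma hWpd {F : 'M[R]_d} : posdefmx F -> posdefmx (W F).
Proof. by move=> hF; apply: posdef_inv; exact: hM. Qed.
Lemma hWsym {F : 'M[R]_d} : posdefmx F -> (W F)^T = W F.
Proof. by move=> hF; have [h _] := hWpd hF; exact: h. Qed.

Lemma hFW {F : 'M[R]_d} : posdefmx F -> F *m W F = 1%:M - N *m W F.
Proof.
by move=> hF; apply/eqP; rewrite eq_sym subr_eq -mulmxDl hMW.
Qed.
Lemma hWF {F : 'M[R]_d} : posdefmx F -> W F *m F = 1%:M - W F *m N.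
Proof.
by move=> hF; apply/eqP; rewrite eq_sym subr_eq -mulmxDr hWM.
Qed.

Lemma inv_right (Y X : 'M[R]_d) : Y *m X = 1%:M -> invmx Y = X.
Proof.
move=> h; have [hY _] := mulmx1_unit h.
by rewrite -[invmx Y]mulmx1 -h mulmxA mulVmx // mul1mx.
Qed.

Lemma h_eq {F : 'M[R]_d} : posdefmx F -> invmx (invmx F + P) = N - N *m W F *m N.
Proof.
move=> hF; apply: inv_right.
have hFu := posdef_unit hF.
have e1 : N - N *m W F *m N = F *m W F *m N by rewrite hFW // mulmxBl mul1mx.
rewrite e1 mulmxDl !mulmxA mulVmx // mul1mx.
rewrite -!mulmxA [F *m _]mulmxA hFW // mulmxBl mul1mx mulmxBr !mulmxA hPN mul1mx.
by rewrite addrC subrK.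
Qed.


Lemma key_id {F : 'M[R]_d} (A : 'M[R]_d) : posdefmx F ->
  (1%:M - A) *m F *m (1%:M - A)^T + A *m N *m A^T
  = (N - N *m W F *m N) + (A - F *m W F) *m (F + N) *m (A - F *m W F)^T.
Proof.
move=> hF; have hWs := hWsym hF; have hFs : F^T = F := hF.1.
have e4 : F *m (W F *m F) = F - N + N *m W F *m N.
  rewrite mulmxA hFW // mulmxBl mul1mx -(mulmxA N (W F) F) hWF // mulmxBr mulmx1 mulmxA.
  by rewrite opprB; move: (N *m W F *m N) => Q; apply/matrixP => i j; rewrite !mxE; ring.
have eE : (A - F *m W F)^T = A^T - W F *m F by rewrite linearB /= trmx_mul hWs hFs.
have e1 : (A - F *m W F) *m (F + N) = A *m (F + N) - F.
  by rewrite mulmxBl -mulmxA hWM // mulmx1.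
have e3 : A *m (F + N) *m (W F *m F) = A *m F.
  by rewrite mulmxA -(mulmxA A) hMW // mulmx1.
rewrite eE e1 [(A *m (F + N) - F) *m _]mulmxBl !mulmxBr e3 e4 (mulmxDr A F N) mulmxDl.
rewrite linearB /= trmx1 mul1mx !mulmxDl !mulmxBr !mulmx1 !mulNmx.
move: (A *m F *m A^T) (A *m N *m A^T) (N *m W F *m N) => X1 X2 X3.
move: (A *m F) (F *m A^T) => X4 X5.
by apply/matrixP => i j; rewrite !mxE; ring.
Qed.



Definition Bm (A : 'M[R]_d) := (1%:M - A)^T *m T *m (1%:M - A).

Lemma trace_Phi F A : \tr (T *m ((1%:M - A) *m F *m (1%:M - A)^T + A *m N *m A^T))
  = \tr (Bm A *m F) + \tr (T *m (A *m N *m A^T)).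
Proof.
rewrite mulmxDr mxtraceD; congr (_ + _).
by rewrite /Bm !mulmxA mxtrace_mulC !mulmxA.
Qed.

Lemma hfun_eq {F : 'M[R]_d} : posdefmx F ->
  \tr (T *m invmx (invmx F + P)) = \tr (T *m N) - \tr (N *m T *m N *m W F).
Proof.
move=> hF; rewrite h_eq // mulmxBr trB; congr (_ - _).
by rewrite !mulmxA mxtrace_mulC !mulmxA.
Qed.

Lemma trace_le_spec (B F : 'M[R]_d) : psdmx F -> \tr (B *m F) <= spec_norm B * \tr F.
Proof.
move=> hF; have [s ->] := psd_gram _ hF.
rewrite mulmx_sumr !tr_sum mulr_sumr; apply: ler_sum => x _.
have -> : \tr (x *m x^T) = nsq x by rewrite mxtrace_mulC tr11.
rewrite mulmxA mxtrace_mulC tr11 /bil mulmxA; exact: quad_le_spec.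
Qed.

Lemma psd_EME {F : 'M[R]_d} (E : 'M[R]_d) : posdefmx F -> psdmx (E *m (F + N) *m E^T).
Proof.
move=> hF; have := psd_congr E^T (posdef_psd (hM hF)); by rewrite trmxK.
Qed.

Lemma weak (tau : R) {F : 'M[R]_d} (A : 'M[R]_d) : posdefmx F -> \tr F <= tau ->
  \tr (T *m invmx (invmx F + P)) <= tau * spec_norm (Bm A) + \tr (T *m (A *m N *m A^T)).
Proof.
move=> hF htr; rewrite h_eq //.
set E := A - F *m W F.
have h1 : 0 <= \tr (T *m (E *m (F + N) *m E^T)).
  by apply: trace_psd hT _ => v; apply: psd_nonneg; exact: psd_EME.
apply: (le_trans (y := \tr (T *m (N - N *m W F *m N)) + \tr (T *m (E *m (F + N) *m E^T)))).
  by rewrite lerDl.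
rewrite -mxtraceD -mulmxDr -key_id // trace_Phi lerD2r.
apply: (le_trans (trace_le_spec _ _ (posdef_psd hF))).
by rewrite mulrC ler_wpM2r // spec_ge0.
Qed.


Let U := N *m T *m N.

Lemma hU : psdmx U.
Proof. by have := psd_congr N hT; rewrite hNsym. Qed.

Lemma trW_le {F : 'M[R]_d} : posdefmx F -> \tr (W F) <= \tr P.
Proof.
move=> hF; apply: tr_le => v.
have := inv_order (hM hF) hN _ v; rewrite /N invmxK; apply => w.
by rewrite bil_addA lerDr; apply: psd_nonneg; exact: posdef_psd.
Qed.

Lemma trP_ge0 : 0 <= \tr P.
Proof. exact: tr_psd_ge0 (posdef_psd hP). Qed.

Definition Cst (tau : R) := \tr U * (\tr P ^+ 3 * (4 * tau ^+ 2)).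

Lemma B0_eq {F0 : 'M[R]_d} (X : 'M[R]_d) : posdefmx F0 ->
  \tr (Bm (F0 *m W F0) *m X) = \tr (U *m (W F0 *m X *m W F0)).
Proof.
move=> hF0.
have e : 1%:M - F0 *m W F0 = N *m W F0 by rewrite hFW // opprB addrC subrK.
rewrite /Bm e trmx_mul hWsym // hNsym /U -!mulmxA mxtrace_mulC !mulmxA.
by [].
Qed.

Lemma Ct_bound (tau : R) {F0 Ft H : 'M[R]_d} : posdefmx F0 -> posdefmx Ft -> psdmx H ->
  \tr F0 <= tau -> \tr H <= tau ->
  \tr (U *m (W F0 *m (H - F0) *m W Ft *m (H - F0) *m W F0)) <= Cst tau.
Proof.
move=> hF0 hFt hH htF hTH.
rewrite /Cst mulrC; apply: tr_le_lam hU _ => v.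
set D := H - F0.
have hDs : D^T = D by rewrite /D linearB /= hH.1 hF0.1.
have e : W F0 *m D *m W Ft *m D *m W F0 = (D *m W F0)^T *m W Ft *m (D *m W F0).
  by rewrite trmx_mul hDs hWsym // !mulmxA.
rewrite e -bil_congr.
have hWt := posdef_psd (hWpd hFt).
apply: (le_trans (qform_le_tr _ _ hWt)).
have h1 : \tr (W Ft) <= \tr P := trW_le hFt.
have h2 : nsq (D *m (W F0 *m v)) <= 4 * tau ^+ 2 * nsq (W F0 *m v).
  rewrite /D mulmxBl; apply: (le_trans (nsq_sub _ _)).
  have := nsq_psd_bound H tau (W F0 *m v) hH hTH.
  have := nsq_psd_bound F0 tau (W F0 *m v) (posdef_psd hF0) htF.
  lra.
have h3 : nsq (W F0 *m v) <= \tr P ^+ 2 * nsq v.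
  exact: nsq_psd_bound (W F0) (\tr P) v (posdef_psd (hWpd hF0)) (trW_le hF0).
have h0W := tr_psd_ge0 _ hWt.
have hn1 := nsq_ge0 (D *m (W F0 *m v)).
have hn2 := nsq_ge0 (W F0 *m v).
have hn3 := nsq_ge0 v.
have hP0 := trP_ge0.
rewrite -mulmxA.
apply: (le_trans (y := \tr P * (4 * tau ^+ 2 * (\tr P ^+ 2 * nsq v)))).
  apply: le_trans (ler_wpM2r hn1 h1) _.
  apply: ler_wpM2l => //; apply: (le_trans h2); apply: ler_wpM2l => //.
  by rewrite mulr_ge0 ?sqr_ge0.
by rewrite le_eqVlt; apply/orP; left; apply/eqP; ring.
Qed.


Lemma step_ineq (tau eps V t : R) {F0 H : 'M[R]_d} :
  posdefmx F0 -> \tr F0 <= tau -> psdmx H -> \tr H <= tau -> 0 < t -> t < 1 ->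
  (forall F, posdefmx F -> \tr F <= tau -> \tr (T *m invmx (invmx F + P)) <= V) ->
  V - eps < \tr (T *m invmx (invmx F0 + P)) ->
  t * (\tr (Bm (F0 *m W F0) *m H) - \tr (Bm (F0 *m W F0) *m F0)) <= eps + t ^+ 2 * Cst tau.
Proof.
move=> hF0 htF hH htH ht0 ht1 hub hlt.
set D := H - F0; set Ft := F0 + t *: D.
have eFt : Ft = (1 - t) *: F0 + t *: H by apply/matrixP => i j; rewrite !mxE; ring.
have hFt : posdefmx Ft.
  rewrite eFt; apply: posdef_add; first by apply: posdef_scale => //; lra.
  by apply: psd_scale => //; exact: ltW.
have trFt : \tr Ft <= tau.
  rewrite eFt mxtraceD !mxtraceZ; have := tr_psd_ge0 _ hH; nra.
have hV := hub Ft hFt trFt.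
rewrite (hfun_eq hFt) in hV; rewrite (hfun_eq hF0) in hlt.
have eM : Ft + N = (F0 + N) + t *: D by rewrite /Ft addrAC.
have hres := resolvent (F0 + N) (Ft + N) D t (posdef_unit (hM hF0)) (posdef_unit (hM hFt)) eM.
have eU : \tr (U *m W Ft) = \tr (U *m W F0) - t * \tr (U *m (W F0 *m D *m W F0))
    + t ^+ 2 * \tr (U *m (W F0 *m D *m W Ft *m D *m W F0)).
  have e0 : \tr (U *m W Ft) = \tr (U *m W F0) - \tr (U *m (W F0 - W Ft)).
    by rewrite mulmxBr trB opprB addrC subrK.
  have hres' : W F0 - W Ft = t *: (W F0 *m D *m W F0)
      - t ^+ 2 *: (W F0 *m D *m W Ft *m D *m W F0) := hres.
  rewrite e0 hres' mulmxBr trB -!scalemxAr !mxtraceZ; ring.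
have hC := Ct_bound tau hF0 hFt hH htF htH.
have eB : \tr (U *m (W F0 *m D *m W F0)) =
    \tr (Bm (F0 *m W F0) *m H) - \tr (Bm (F0 *m W F0) *m F0).
  by rewrite -B0_eq // /D mulmxBr trB.
rewrite -eB.
rewrite -/U in hV hlt.
have ht2 : 0 <= t ^+ 2 by rewrite sqr_ge0.
have := ler_wpM2l ht2 hC.
rewrite eU in hV; lra.
Qed.


Lemma hfun_A0 {F0 : 'M[R]_d} : posdefmx F0 ->
  \tr (T *m invmx (invmx F0 + P)) = \tr (Bm (F0 *m W F0) *m F0)
     + \tr (T *m (F0 *m W F0 *m N *m (F0 *m W F0)^T)).
Proof.
move=> hF0; rewrite -trace_Phi key_id // subrr !mul0mx addr0 h_eq //.
Qed.

Lemma psd_vvT (v : 'cV[R]_d) : psdmx (v *m v^T).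
Proof.
split; first by rewrite /symmx trmx_mul trmxK.
by move=> w; rewrite qformE bil_outer (bil1 v w) -expr2 sqr_ge0.
Qed.

Lemma Cst_ge0 tau : 0 <= Cst tau.
Proof.
rewrite /Cst; apply: mulr_ge0; first exact: tr_psd_ge0 _ hU.
apply: mulr_ge0; first by rewrite exprn_ge0 // trP_ge0.
by rewrite mulr_ge0 // sqr_ge0.
Qed.

Lemma posdef1 : posdefmx (1%:M : 'M[R]_d).
Proof. by split; [exact: sym1 | move=> v hv; rewrite qformE -nsqE nsq_gt0]. Qed.

Lemma main_core (tau : R) : 0 < tau ->
  sup [set frob T (invmx (invmx F + P)) | F in [set F : 'M[R]_d | posdefmx F /\ \tr F <= tau]]
  = inf [set tau * spec_norm ((1%:M - A)^T *m T *m (1%:M - A)) + frob T (A *m invmx P *m A^T)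
        | A in [set: 'M[R]_d]].
Proof.
move=> htau.
have hfr X : frob T X = \tr (T *m X) by rewrite /frob hT.1.
set HS := [set _ | _ in _]; set GS := [set _ | _ in _].
pose F1 : 'M[R]_d := (tau / (d.+1)%:R) *: 1%:M.
have hF1 : posdefmx F1 by apply: posdef_scale posdef1; rewrite divr_gt0.
have htF1 : \tr F1 <= tau.
  rewrite mxtraceZ mxtrace1 -mulrA ger_pMr //.
  by rewrite mulrC ler_pdivrMr // mul1r ler_nat.
have hHSne : HS !=set0 by exists (frob T (invmx (invmx F1 + P))); exists F1.
have hubnd F : posdefmx F -> \tr (T *m invmx (invmx F + P)) <= \tr (T *m N).
  move=> hF; rewrite hfun_eq // gerBl; apply: trace_psd hU _ => v.
  exact: psd_nonneg (posdef_psd (hWpd hF)).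
have hHSub : has_ubound HS by exists (\tr (T *m N)) => x [F [hF _] <-]; rewrite hfr hubnd.
have hle F : posdefmx F -> \tr F <= tau -> \tr (T *m invmx (invmx F + P)) <= sup HS.
  by move=> hF htF; rewrite -hfr; apply: (ub_le_sup hHSub); exists F.
have hGSne : GS !=set0 by exists (tau * spec_norm ((1%:M - 0)^T *m T *m (1%:M - 0))
   + frob T (0 *m invmx P *m 0^T)); exists 0.
have hg0 A : 0 <= tau * spec_norm ((1%:M - A)^T *m T *m (1%:M - A)) + frob T (A *m invmx P *m A^T).
  apply: addr_ge0; first by apply: mulr_ge0; [exact: ltW | exact: spec_ge0].
  rewrite hfr; apply: trace_psd hT _ => v; apply: psd_nonneg.
  by have := psd_congr A^T (posdef_psd hN); rewrite trmxK.
have hGSlb : has_lbound GS by exists 0 => x [A _ <-].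
apply/eqP; rewrite eq_le; apply/andP; split.
  apply: lb_le_inf hGSne _ => x [A _ <-].
  apply: ge_sup hHSne _ => y [F [hF htF] <-].
  by rewrite !hfr; exact: weak.
apply/ler_addgt0Pr => delta hdelta.
set V := sup HS.
set C := Cst tau + 1.
have hC : 0 < C by rewrite /C ltr_pwDr ?Cst_ge0.
set t := Num.min (1 / 2) (delta / (2 * C)).
have ht0 : 0 < t by rewrite lt_min divr_gt0 //= divr_gt0 // mulr_gt0.
have ht1 : t < 1 by rewrite gt_min; apply/orP; left; rewrite ltr_pdivrMr //; lra.
have htC : t * C <= delta / 2.
  have : t <= delta / (2 * C) by rewrite ge_min lexx orbT.
  rewrite ler_pdivlMr ?mulr_gt0 // => h; rewrite ler_pdivlMr //; lra.
set eps := delta * t / 2.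
have heps : 0 < eps by rewrite divr_gt0 // mulr_gt0.
have [e [F0 [hF0 htF0] <-] hlt] := sup_adherent heps (conj hHSne hHSub).
rewrite hfr -/V in hlt.
set A0 := F0 *m W F0.
set B0 := Bm A0.
have hB0 : psdmx B0 by exact: psd_congr _ hT.
have hB0F0 : 0 <= \tr (B0 *m F0).
  by apply: trace_psd hB0 _ => v; apply: psd_nonneg; exact: posdef_psd.
have key v : tau * bil B0 v v <= (\tr (B0 *m F0) + delta) * nsq v.
  have [h0|hn] := eqVneq (nsq v) 0.
    have := qform_le_tr B0 v hB0; rewrite h0 !mulr0 => h.
    by rewrite pmulr_rle0.
  have hnv : 0 < nsq v by rewrite lt_neqAle eq_sym hn nsq_ge0.
  pose H := (tau / nsq v) *: (v *m v^T).
  have hH : psdmx H by apply: psd_scale (psd_vvT v); rewrite divr_ge0 ?ltW.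
  have htrvv : \tr (v *m v^T) = nsq v by rewrite mxtrace_mulC tr11.
  have htH : \tr H <= tau by rewrite mxtraceZ htrvv divfK ?gt_eqF.
  have hs := step_ineq tau eps V t hF0 htF0 hH htH ht0 ht1 hle hlt.
  have eH : \tr (B0 *m H) = tau / nsq v * bil B0 v v.
    by rewrite -scalemxAr mxtraceZ mulmxA mxtrace_mulC tr11 /bil mulmxA.
  rewrite -/A0 -/B0 eH in hs.
  have hCst : Cst tau <= C by rewrite /C lerDl.
  have h2 : t ^+ 2 * Cst tau <= t * (delta / 2).
    rewrite expr2 -mulrA; apply: ler_wpM2l; first exact: ltW.
    by apply: le_trans htC; apply: ler_wpM2l; [exact: ltW | ].
  have h3 : tau / nsq v * bil B0 v v - \tr (B0 *m F0) <= delta.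
    rewrite -(ler_pM2l ht0); apply: (le_trans hs); rewrite /eps; lra.
  have -> : tau * bil B0 v v = (tau / nsq v * bil B0 v v) * nsq v.
    by rewrite mulrAC divfK ?gt_eqF.
  apply: ler_wpM2r; [exact: nsq_ge0 | lra].
set lam := (\tr (B0 *m F0) + delta) / tau.
have hlam : 0 <= lam.
  apply: divr_ge0; last exact: ltW.
  by apply: addr_ge0 => //; exact: ltW.
have hspec : spec_norm B0 <= lam.
  apply: (spec_le B0 lam hlam) => v; apply: (op_bound B0 lam v hB0 hlam) => w.
  by rewrite /lam mulrAC ler_pdivlMr // mulrC key.
have hinf : inf GS <= tau * spec_norm B0 + frob T (A0 *m invmx P *m A0^T).
  by apply: (ge_inf hGSlb); exists A0.
apply: (le_trans hinf).
rewrite hfr.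
have e1 := hfun_A0 hF0.
have e2 : tau * spec_norm B0 <= \tr (B0 *m F0) + delta.
  by rewrite -ler_pdivlMl // mulrC.
have : \tr (T *m invmx (invmx F0 + P)) <= V.
  by apply: hle.
rewrite e1 -/A0 -/B0; lra.
Qed.

End Core.

Theorem theorem3 (R : realType) (d : nat) (S M T Mih : 'M[R]_d) (sigma : R) (n : nat) :
  posdefmx S -> posdefmx M -> psdmx T -> 0 < sigma -> (1 <= n)%N ->
  (* Mih = M^{-1/2}: the symmetric positive definite square root of M^{-1} *)
  posdefmx Mih -> Mih *m Mih = invmx M ->
  let S' := Mih *m S *m Mih in
  let T' := Mih *m T *m Mih in
  sup [set frob T' (invmx (invmx F + (n%:R / sigma ^+ 2) *: S'))
        | F in [set F : 'M[R]_d | posdefmx F /\ \tr F <= (pi ^+ 2)^-1]]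
  = inf [set (pi ^+ 2)^-1 * spec_norm ((1%:M - A)^T *m T' *m (1%:M - A))
              + (sigma ^+ 2 / n%:R) * frob T' (A *m invmx S' *m A^T)
        | A in [set: 'M[R]_d]].
Proof.
move=> hS _ hT hsig hn hMih _ S' T'.
have hMs : Mih^T = Mih := hMih.1.
have hS' : posdefmx S' by have := posdef_congr hS hMih; rewrite hMs.
have hT' : psdmx T' by have := psd_congr Mih hT; rewrite hMs.
have hn0 : 0 < n%:R :> R by rewrite ltr0n.
have hc : 0 < n%:R / sigma ^+ 2 :> R by rewrite divr_gt0 // exprn_gt0.
have hP : posdefmx ((n%:R / sigma ^+ 2) *: S') by exact: posdef_scale hc hS'.
have htau : 0 < (pi ^+ 2)^-1 :> R by rewrite invr_gt0 exprn_gt0 // pi_gt0.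
rewrite (main_core T' _ hT' hP _ htau); congr inf; apply: eq_imagel => A _.
congr (_ + _).
rewrite invmxZ; last exact: posdef_unit hP.
rewrite invf_div -scalemxAr -scalemxAl /frob -scalemxAr mxtraceZ //.
Qed.
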